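(* Let $P\subset\mathbb{R}^2$ be a finite set of $n\ge 1$ points. Then there exists $p\in P$ such that $p\in T$ for every downward facing equilateral triangle $T$ with $|T\cap P|>\frac{2n}{3}$.
   Context: A downward facing equilateral triangle is a closed (filled) equilateral triangle in $\mathbb{R}^2$ having one side parallel to the $x$-axis and the vertex opposite to that side lying strictly below the line containing that side. Equivalently, it is a set of the form $\bigcap_{i=1}^3\{x:\langle u_i,x\rangle\le t_i\}$ with nonempty interior, where $u_1,u_2,u_3$ are the unit vectors making angles $90^\circ,210^\circ,330^\circ$ with the positive $x$-axis and $t_1,t_2,t_3\in\mathbb{R}$. *)

(* Defs.v *)
From Stdlib Require Import Reals Lra List.
Import ListNotations.
Open Scope R_scope.

Definition pt := (R * R)%type.

Definition dot (u x : pt) : R := fst u * fst x + snd u * snd x.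

(* unit vectors at angles 90, 210, 330 degrees *)
Definition u1 : pt := (0, 1).
Definition u2 : pt := (- (sqrt 3 / 2), - (1 / 2)).
Definition u3 : pt := (sqrt 3 / 2, - (1 / 2)).

Definition in_tri (t1 t2 t3 : R) (x : pt) : Prop :=
  dot u1 x <= t1 /\ dot u2 x <= t2 /\ dot u3 x <= t3.

Definition in_trib (t1 t2 t3 : R) (x : pt) : bool :=
  if Rle_dec (dot u1 x) t1 then
    if Rle_dec (dot u2 x) t2 then
      if Rle_dec (dot u3 x) t3 then true else false
    else false
  else false.

Definition nonempty_interior (t1 t2 t3 : R) : Prop :=
  exists (c : pt) (eps : R), 0 < eps /\
    forall x : pt, (fst x - fst c)^2 + (snd x - snd c)^2 < eps^2 -> in_tri t1 t2 t3 x.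

Definition down_triangle (t1 t2 t3 : R) : Prop := nonempty_interior t1 t2 t3.

(* |T ∩ P| for P given as a duplicate-free list *)
Definition count_in (t1 t2 t3 : R) (P : list pt) : nat :=
  length (filter (in_trib t1 t2 t3) P).

(* Main.v *)
Require Import Defs.
From Stdlib Require Import Reals List.
From Stdlib Require Import Lra Lia Classical.
Import ListNotations.
Open Scope bool_scope.
Open Scope R_scope.

Lemma trib_tri t1 t2 t3 x : in_trib t1 t2 t3 x = true -> in_tri t1 t2 t3 x.
Proof.
  unfold in_trib, in_tri.
  destruct (Rle_dec (dot u1 x) t1); destruct (Rle_dec (dot u2 x) t2); destruct (Rle_dec (dot u3 x) t3);
    try discriminate; auto.
Qed.

Lemma count_and (a b : pt -> bool) (P : list pt) :
  (length (filter (fun x => a x && b x) P) + length P >=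
   length (filter a P) + length (filter b P))%nat.
Proof.
  induction P as [|x P IH]; simpl; [lia|].
  destruct (a x); destruct (b x); simpl; lia.
Qed.

Lemma min_lem (L : list R) (Q : R -> Prop) :
  (exists v, In v L /\ Q v) ->
  exists v, In v L /\ Q v /\ forall w, In w L -> Q w -> v <= w.
Proof.
  induction L as [|a L IH]; intros [v [Hv HQ]]; [destruct Hv|].
  destruct (classic (exists v, In v L /\ Q v)) as [H|H].
  - destruct (IH H) as [v' [H1 [H2 H3]]].
    destruct (classic (Q a)) as [Qa|Qa].
    + destruct (Rle_dec a v').
      * exists a; split; [left; auto|split; auto].
        intros w [<-|Hw] Hq; [lra|]. specialize (H3 w Hw Hq); lra.
      * exists v'; split; [right; auto|split; auto].
        intros w [<-|Hw] Hq; [lra|]. auto.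
    + exists v'; split; [right; auto|split; auto].
      intros w [<-|Hw] Hq; [contradiction|auto].
  - destruct Hv as [<-|Hv]; [|exfalso; apply H; eauto].
    exists a; split; [left; auto|split; auto].
    intros w [<-|Hw] Hq; [lra|exfalso; apply H; eauto].
Qed.

Lemma max_lem (L : list pt) (h : pt -> R) :
  L <> [] -> exists x, In x L /\ forall y, In y L -> h y <= h x.
Proof.
  induction L as [|a L IH]; intros Hne; [congruence|].
  destruct L as [|b L'].
  - exists a; split; [left; auto|]. intros y [<-|[]]; lra.
  - destruct IH as [x [Hx Hm]]; [discriminate|].
    destruct (Rle_dec (h a) (h x)).
    + exists x; split; [right; auto|]. intros y [<-|Hy]; [lra|auto].
    + exists a; split; [left; auto|]. intros y [<-|Hy]; [lra|].
      specialize (Hm y Hy); lra.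
Qed.

Definition Qual (P : list pt) t1 t2 t3 :=
  down_triangle t1 t2 t3 /\ INR (count_in t1 t2 t3 P) > 2 * INR (length P) / 3.

Lemma qual_max P t1 t2 t3 (h : pt -> R) : Qual P t1 t2 t3 ->
  exists q, In q P /\ in_trib t1 t2 t3 q = true /\
    forall p, In p P -> in_trib t1 t2 t3 p = true -> h p <= h q.
Proof.
  intros [_ Hc].
  assert (Hne : filter (in_trib t1 t2 t3) P <> []).
  { intro E. unfold count_in in Hc. rewrite E in Hc. simpl in Hc.
    pose proof (pos_INR (length P)). lra. }
  destruct (max_lem _ h Hne) as [q [Hq Hm]].
  apply filter_In in Hq as [Hq1 Hq2].
  exists q; repeat split; auto.
  intros p Hp Hb. apply Hm. apply filter_In; auto.
Qed.

Lemma key (P : list pt) (h : pt -> R) (g : R -> R -> R -> R)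
  (Hg : forall t1 t2 t3 x, in_tri t1 t2 t3 x -> h x <= g t1 t2 t3)
  (Hex : exists t1 t2 t3, Qual P t1 t2 t3) :
  exists s1 s2 s3 v, Qual P s1 s2 s3 /\
    (forall p, In p P -> in_trib s1 s2 s3 p = true -> h p <= v) /\
    (forall t1 t2 t3, Qual P t1 t2 t3 -> v <= g t1 t2 t3).
Proof.
  set (Qv := fun v => exists s1 s2 s3, Qual P s1 s2 s3 /\
    forall p, In p P -> in_trib s1 s2 s3 p = true -> h p <= v).
  destruct Hex as [t1 [t2 [t3 HT]]].
  destruct (qual_max P t1 t2 t3 h HT) as [q [Hq [Hqb Hqm]]].
  destruct (min_lem (map h P) Qv) as [v [Hv [HQv Hmin]]].
  { exists (h q); split; [apply in_map; auto|]. exists t1, t2, t3; auto. }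
  destruct HQv as [s1 [s2 [s3 [HS HSb]]]].
  exists s1, s2, s3, v; split; [auto|split; [auto|]].
  intros u1' u2' u3' HU.
  destruct (qual_max P u1' u2' u3' h HU) as [r [Hr [Hrb Hrm]]].
  assert (v <= h r).
  { apply Hmin; [apply in_map; auto|]. exists u1', u2', u3'; auto. }
  pose proof (Hg _ _ _ _ (trib_tri _ _ _ _ Hrb)). lra.
Qed.

Lemma nat_of_qual P t1 t2 t3 : Qual P t1 t2 t3 ->
  (3 * count_in t1 t2 t3 P > 2 * length P)%nat.
Proof.
  intros [_ H]. apply INR_lt. rewrite !mult_INR. simpl. lra.
Qed.

Theorem corollary1 (P : list pt) (HP : NoDup P) (Hn : (1 <= length P)%nat) :
  exists p : pt, In p P /\
    forall t1 t2 t3 : R, down_triangle t1 t2 t3 ->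
      INR (count_in t1 t2 t3 P) > 2 * INR (length P) / 3 ->
      in_tri t1 t2 t3 p.
Proof.
  destruct (classic (exists t1 t2 t3, Qual P t1 t2 t3)) as [Hex|Hno].
  - destruct (key P (dot u1) (fun a _ _ => a)) as [a1 [a2 [a3 [v1 [HA [HAb HAm]]]]]];
      [intros ? ? ? ? [? ?]; auto | auto|].
    destruct (key P (dot u2) (fun _ a _ => a)) as [b1 [b2 [b3 [v2 [HB [HBb HBm]]]]]];
      [intros ? ? ? ? [? [? ?]]; auto | auto|].
    destruct (key P (dot u3) (fun _ _ a => a)) as [c1 [c2 [c3 [v3 [HC [HCb HCm]]]]]];
      [intros ? ? ? ? [? [? ?]]; auto | auto|].
    pose proof (nat_of_qual _ _ _ _ HA) as NA.
    pose proof (nat_of_qual _ _ _ _ HB) as NB.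
    pose proof (nat_of_qual _ _ _ _ HC) as NC.
    unfold count_in in NA, NB, NC.
    pose proof (count_and (in_trib a1 a2 a3) (in_trib b1 b2 b3) P) as K1.
    pose proof (count_and (fun x => in_trib a1 a2 a3 x && in_trib b1 b2 b3 x)
                  (in_trib c1 c2 c3) P) as K2.
    set (F := filter (fun x => (in_trib a1 a2 a3 x && in_trib b1 b2 b3 x)
                                 && in_trib c1 c2 c3 x) P) in K2.
    destruct F as [|p F'] eqn:EF.
    + simpl in K2. lia.
    + assert (Hp : In p F) by (rewrite EF; left; auto).
      unfold F in Hp. apply filter_In in Hp as [HpP Hpb].
      apply andb_prop in Hpb as [Hpb Hc]. apply andb_prop in Hpb as [Ha Hb].
      exists p; split; auto.
      intros t1 t2 t3 Hd Hc'.
      assert (HQ : Qual P t1 t2 t3) by (split; auto).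
      specialize (HAb p HpP Ha). specialize (HBb p HpP Hb). specialize (HCb p HpP Hc).
      specialize (HAm _ _ _ HQ). specialize (HBm _ _ _ HQ). specialize (HCm _ _ _ HQ).
      simpl in *. unfold in_tri. repeat split; lra.
  - destruct P as [|p P']; [simpl in Hn; lia|].
    exists p; split; [left; auto|].
    intros t1 t2 t3 Hd Hc. exfalso. apply Hno. exists t1, t2, t3; split; auto.
Qed.
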